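(* Let $\mathbb{X}$ be a basic reverse differential restriction category with countable disjoint joins. Let the following be given: - maps $b_T,b_F:\Gamma\times U\to 1$ such that $\overline{b_T}\,\overline{b_F}$ is nowhere defined; - maps $m,n:\Gamma\times U\to T$; - maps $a:\Gamma\to U$ and $v:\Gamma\to T$. Then $$\langle\langle 1_\Gamma,a\rangle,v\rangle\,R\big[\overline{b_T}\,m\vee\overline{b_F}\,n\big]\,\pi_1 =\overline{\langle 1_\Gamma,a\rangle b_T}\,\langle\langle 1_\Gamma,a\rangle,v\rangle R[m]\pi_1\ \vee\ \overline{\langle 1_\Gamma,a\rangle b_F}\,\langle\langle 1_\Gamma,a\rangle,v\rangle R[n]\pi_1 .$$ In the language SDPL, this is the statement that $$[\![v.\mathrm{rd}(x{:}U.\ \texttt{if } b \texttt{ then } m\texttt{ else } n)(a)]\!]=[\![\texttt{if }(\texttt{let } x=a\texttt{ in } b)\texttt{ then } v.\mathrm{rd}(x{:}U.m)(a)\texttt{ else } v.\mathrm{rd}(x{:}U.n)(a)]\!].$$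
   Context: Composition is written in diagrammatic order: $fg$ means ''first $f$, then $g$''. A restriction category is a category with an operation sending each $f:A\to B$ to a map $\bar f:A\to A$ such that $\bar f f=f$, $\bar f\bar g=\bar g\bar f$ (for $f,g$ with common domain), $\overline{\bar f g}=\bar f\bar g$, and $f\bar g=\overline{fg}\,f$. A map $f$ is total if $\bar f=1$. For parallel maps: - $f\le g$ means $\bar f g=f$; - a nowhere-defined map $\emptyset$ is a least element for $\le$; - $f,g$ are disjoint if $\bar f g$ is nowhere defined; - the join $\bigvee_i f_i$ of a family is its least upper bound for $\le$. ''Countable disjoint joins'' means that every countable family of pairwise disjoint parallel maps has a join, and composition preserves such joins on both sides: $h(\bigvee_i f_i)k=\bigvee_i hf_ik$. The category has restriction products if: - there is an object $1$ with a total map $!_A:A\to 1$ for each $A$ such that every $f:A\to1$ equals $\bar f\,!_A$; - for all $A,B$ there is an object $A\times B$ with total maps $\pi_0,\pi_1$ such that for all $f:C\to A$, $g:C\to B$ there is a unique $\langle f,g\rangle$ with $\langle f,g\rangle\pi_0=\bar g f$ and $\langle f,g\rangle\pi_1=\bar f g$. Write $f\times g=\langle\pi_0f,\pi_1g\rangle$. A Cartesian left additive restriction category is a restriction category with restriction products in which every hom-set is a commutative monoid $(+,0)$ such that: - $\overline{f+g}=\bar f\bar g$ and $\bar 0=1$; - $x(f+g)=xf+xg$ and $x0=\bar x 0$; - $(f+g)\pi_i=f\pi_i+g\pi_i$ and $0\pi_i=0$. Write $\iota_0=\langle 1,0\rangle$ and $\iota_1=\langle 0,1\rangle$. A basic reverse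 differential restriction category is a Cartesian left additive restriction category with an operation sending each $f:A\to B$ to $R[f]:A\times B\to A$ satisfying: - [RD.1] $R[f+g]=R[f]+R[g]$ and $R[0]=0$. - [RD.2] $\langle a,b+c\rangle R[f]=\langle a,b\rangle R[f]+\langle a,c\rangle R[f]$ and $\langle a,0\rangle R[f]=\overline{af}\,0$. - [RD.3] $R[\pi_j]=\pi_1\iota_j$. - [RD.4] $R[\langle f,g\rangle]=(1\times\pi_0)R[f]+(1\times\pi_1)R[g]$. - [RD.5] $R[fg]=\langle\pi_0,\langle\pi_0f,\pi_1\rangle R[g]\rangle R[f]$. - [RD.8] $\overline{R[f]}=\bar f\times 1$. - [RD.9] $R[\bar f]=(\bar f\times1)\pi_1$. Semantics of SDPL used in the second formulation: - A predicate $b$ in context $\Gamma,x{:}U$ is interpreted by a pair $(b_T,b_F)$ of maps $\Gamma\times U\to 1$ with disjoint restrictions. - $[\![\texttt{if } b\texttt{ then }m\texttt{ else }n]\!]=\overline{b_T}[\![m]\!]\vee\overline{b_F}[\![n]\!]$. - $[\![\texttt{let } x=a\texttt{ in } b]\!]_H=\langle 1,[\![a]\!]\rangle b_H$ for $H\in\{T,F\}$. - $[\![v.\mathrm{rd}(x.m)(a)]\!]=\langle\langle 1,[\![a]\!]\rangle,[\![v]\!]\rangle R[[\![m]\!]]\pi_1$. *)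

(* Defs.v *)
(* Composition is written in diagrammatic order: f >> g = "first f, then g". *)

Record RDRCData := {
  Obj : Type;
  Hom : Obj -> Obj -> Type;
  comp : forall A B C : Obj, Hom A B -> Hom B C -> Hom A C;
  idm : forall A : Obj, Hom A A;
  rst : forall A B : Obj, Hom A B -> Hom A A;
  one : Obj;
  bang : forall A : Obj, Hom A one;
  prod : Obj -> Obj -> Obj;
  pi0 : forall A B : Obj, Hom (prod A B) A;
  pi1 : forall A B : Obj, Hom (prod A B) B;
  pair : forall A B C : Obj, Hom C A -> Hom C B -> Hom C (prod A B);
  add : forall A B : Obj, Hom A B -> Hom A B -> Hom A B;
  zero : forall A B : Obj, Hom A B;
  RD : forall A B : Obj, Hom A B -> Hom (prod A B) A
}.

Arguments comp {_ _ _ _} _ _.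
Arguments idm {_} _.
Arguments rst {_ _ _} _.
Arguments one {_}.
Arguments bang {_} _.
Arguments prod {_} _ _.
Arguments pi0 {_ _ _}.
Arguments pi1 {_ _ _}.
Arguments pair {_ _ _ _} _ _.
Arguments add {_ _ _} _ _.
Arguments zero {_ _ _}.
Arguments RD {_ _ _} _.

Declare Scope rc_scope.
Delimit Scope rc_scope with rc.
Open Scope rc_scope.
Notation "f >> g" := (comp f g) (at level 40, left associativity) : rc_scope.
Notation "⟨ f , g ⟩" := (pair f g) (at level 0) : rc_scope.

Section Defs.
Variable X : RDRCData.

Definition total {A B : Obj X} (f : Hom X A B) : Prop := rst f = idm A.

Definition tens {A B C D : Obj X} (f : Hom X A C) (g : Hom X B D)
  : Hom X (prod A B) (prod C D) := ⟨ pi0 >> f , pi1 >> g ⟩.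

Definition iota0 {A B : Obj X} : Hom X A (prod A B) := ⟨ idm A , zero ⟩.
Definition iota1 {A B : Obj X} : Hom X B (prod A B) := ⟨ zero , idm B ⟩.

Definition le {A B : Obj X} (f g : Hom X A B) : Prop := rst f >> g = f.

Definition nowhere {A B : Obj X} (f : Hom X A B) : Prop :=
  forall g : Hom X A B, le f g.

Definition disjoint {A B : Obj X} (f g : Hom X A B) : Prop :=
  nowhere (rst f >> g).

Definition is_join {I : Type} {A B : Obj X} (f : I -> Hom X A B) (j : Hom X A B)
  : Prop :=
  (forall i, le (f i) j) /\
  (forall h : Hom X A B, (forall i, le (f i) h) -> le j h).

Definition is_join2 {A B : Obj X} (f g j : Hom X A B) : Prop :=
  le f j /\ le g j /\ (forall h, le f h -> le g h -> le j h).

Definition pairwise_disjoint {I : Type} {A B : Obj X} (f : I -> Hom X A B) : Prop :=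
  forall i i', i <> i' -> disjoint (f i) (f i').

(* countable disjoint joins: every countable (possibly finite or empty)
   pairwise-disjoint family has a join, preserved by composition on both sides *)
Definition has_countable_disjoint_joins : Prop :=
  forall (I : Type) (e : I -> nat), (forall i i', e i = e i' -> i = i') ->
  forall (A B : Obj X) (f : I -> Hom X A B), pairwise_disjoint f ->
    (exists j, is_join f j) /\
    (forall (C D : Obj X) (h : Hom X C A) (k : Hom X B D) (j : Hom X A B),
        is_join f j -> is_join (fun i => h >> f i >> k) (h >> j >> k)).

Record IsBasicRDRC : Prop := {
  comp_assoc : forall (A B C D : Obj X) (f : Hom X A B) (g : Hom X B C) (h : Hom X C D),
      (f >> g) >> h = f >> (g >> h);
  comp_idl : forall (A B : Obj X) (f : Hom X A B), idm A >> f = f;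
  comp_idr : forall (A B : Obj X) (f : Hom X A B), f >> idm B = f;
  R1 : forall (A B : Obj X) (f : Hom X A B), rst f >> f = f;
  R2 : forall (A B C : Obj X) (f : Hom X A B) (g : Hom X A C),
      rst f >> rst g = rst g >> rst f;
  R3 : forall (A B C : Obj X) (f : Hom X A B) (g : Hom X A C),
      rst (rst f >> g) = rst f >> rst g;
  R4 : forall (A B C : Obj X) (f : Hom X A B) (g : Hom X B C),
      f >> rst g = rst (f >> g) >> f;
  bang_total : forall A : Obj X, total (bang A);
  to_one : forall (A : Obj X) (f : Hom X A one), f = rst f >> bang A;
  pi0_total : forall A B : Obj X, total (@pi0 X A B);
  pi1_total : forall A B : Obj X, total (@pi1 X A B);
  pair_pi0 : forall (A B C : Obj X) (f : Hom X C A) (g : Hom X C B),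
      ⟨ f , g ⟩ >> pi0 = rst g >> f;
  pair_pi1 : forall (A B C : Obj X) (f : Hom X C A) (g : Hom X C B),
      ⟨ f , g ⟩ >> pi1 = rst f >> g;
  pair_uniq : forall (A B C : Obj X) (f : Hom X C A) (g : Hom X C B)
      (h : Hom X C (prod A B)),
      h >> pi0 = rst g >> f -> h >> pi1 = rst f >> g -> h = ⟨ f , g ⟩;
  add_assoc : forall (A B : Obj X) (f g h : Hom X A B),
      add (add f g) h = add f (add g h);
  add_comm : forall (A B : Obj X) (f g : Hom X A B), add f g = add g f;
  add_0l : forall (A B : Obj X) (f : Hom X A B), add zero f = f;
  rst_add : forall (A B : Obj X) (f g : Hom X A B), rst (add f g) = rst f >> rst g;
  rst_zero : forall A B : Obj X, rst (@zero X A B) = idm A;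
  comp_add : forall (A B C : Obj X) (x : Hom X A B) (f g : Hom X B C),
      x >> add f g = add (x >> f) (x >> g);
  comp_zero : forall (A B C : Obj X) (x : Hom X A B),
      x >> (@zero X B C) = rst x >> zero;
  add_pi0 : forall (A B C : Obj X) (f g : Hom X C (prod A B)),
      add f g >> pi0 = add (f >> pi0) (g >> pi0);
  add_pi1 : forall (A B C : Obj X) (f g : Hom X C (prod A B)),
      add f g >> pi1 = add (f >> pi1) (g >> pi1);
  zero_pi0 : forall (A B C : Obj X), (@zero X C (prod A B)) >> pi0 = zero;
  zero_pi1 : forall (A B C : Obj X), (@zero X C (prod A B)) >> pi1 = zero;
  RD1_add : forall (A B : Obj X) (f g : Hom X A B), RD (add f g) = add (RD f) (RD g);
  RD1_zero : forall A B : Obj X, RD (@zero X A B) = zero;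
  RD2_add : forall (A B C : Obj X) (f : Hom X A B) (a : Hom X C A) (b c : Hom X C B),
      ⟨ a , add b c ⟩ >> RD f = add (⟨ a , b ⟩ >> RD f) (⟨ a , c ⟩ >> RD f);
  RD2_zero : forall (A B C : Obj X) (f : Hom X A B) (a : Hom X C A),
      ⟨ a , zero ⟩ >> RD f = rst (a >> f) >> zero;
  RD3_0 : forall A B : Obj X, RD (@pi0 X A B) = pi1 >> iota0;
  RD3_1 : forall A B : Obj X, RD (@pi1 X A B) = pi1 >> iota1;
  RD4 : forall (A B C : Obj X) (f : Hom X C A) (g : Hom X C B),
      RD ⟨ f , g ⟩ = add (tens (idm C) pi0 >> RD f) (tens (idm C) pi1 >> RD g);
  RD5 : forall (A B C : Obj X) (f : Hom X A B) (g : Hom X B C),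
      RD (f >> g) = ⟨ pi0 , ⟨ pi0 >> f , pi1 ⟩ >> RD g ⟩ >> RD f;
  RD8 : forall (A B : Obj X) (f : Hom X A B), rst (RD f) = tens (rst f) (idm B);
  RD9 : forall (A B : Obj X) (f : Hom X A B), RD (rst f) = tens (rst f) (idm A) >> pi1
}.

End Defs.

Arguments tens {X A B C D} f g.
Arguments iota0 {X A B}.
Arguments iota1 {X A B}.
Arguments le {X A B} f g.
Arguments nowhere {X A B} f.
Arguments disjoint {X A B} f g.
Arguments is_join {X I A B} f j.
Arguments is_join2 {X A B} f g j.

(* Main.v *)
Require Import Defs.

Ltac AS HX := repeat rewrite (comp_assoc _ HX).

Lemma pi0t (X : RDRCData) (HX : IsBasicRDRC X) (A B : Obj X) : rst (@pi0 X A B) = idm _.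
Proof. exact (pi0_total _ HX A B). Qed.
Lemma pi1t (X : RDRCData) (HX : IsBasicRDRC X) (A B : Obj X) : rst (@pi1 X A B) = idm _.
Proof. exact (pi1_total _ HX A B). Qed.

Lemma rst_id (X : RDRCData) (HX : IsBasicRDRC X) (A : Obj X) : rst (idm A) = idm A.
Proof. pose proof (R1 _ HX _ _ (idm A)) as H. rewrite (comp_idr _ HX) in H. exact H. Qed.

Lemma rst_rst (X : RDRCData) (HX : IsBasicRDRC X) (A B : Obj X) (f : Hom X A B) :
  rst (rst f) = rst f.
Proof.
  pose proof (R3 _ HX _ _ _ f (idm A)) as H.
  rewrite (comp_idr _ HX), (rst_id X HX), (comp_idr _ HX) in H. exact H.
Qed.

Lemma rst_idem (X : RDRCData) (HX : IsBasicRDRC X) (A B : Obj X) (f : Hom X A B) :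
  rst f >> rst f = rst f.
Proof. pose proof (R1 _ HX _ _ (rst f)) as H. rewrite (rst_rst X HX) in H. exact H. Qed.

Lemma rst_comp_le (X : RDRCData) (HX : IsBasicRDRC X) (A B C : Obj X) (f : Hom X A B) (g : Hom X B C) :
  rst f >> rst (f >> g) = rst (f >> g).
Proof.
  rewrite <- (R3 _ HX). rewrite <- (comp_assoc _ HX). rewrite (R1 _ HX). reflexivity.
Qed.

Lemma rst_total (X : RDRCData) (HX : IsBasicRDRC X) (A B C : Obj X) (f : Hom X A B) (g : Hom X B C) :
  rst g = idm B -> rst (f >> g) = rst f.
Proof.
  intro Hg.
  pose proof (R4 _ HX _ _ _ f g) as H. rewrite Hg, (comp_idr _ HX) in H.
  symmetry. transitivity (rst (rst (f >> g) >> f)). { rewrite <- H. reflexivity. }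
  rewrite (R3 _ HX), (R2 _ HX), (rst_comp_le X HX). reflexivity.
Qed.

Lemma tens_rst (X : RDRCData) (HX : IsBasicRDRC X) (A B : Obj X) (e : Hom X A A) :
  rst e = e -> tens (B:=B) e (idm B) = rst (pi0 >> e).
Proof.
  intro He. unfold tens. symmetry. apply (pair_uniq _ HX).
  - rewrite <- (R4 _ HX), He, (comp_idr _ HX), (pi1t X HX), (comp_idl _ HX). reflexivity.
  - rewrite (comp_idr _ HX). reflexivity.
Qed.

Lemma T2 (X : RDRCData) (HX : IsBasicRDRC X) (A B : Obj X) (e : Hom X A A) :
  rst e = e -> ⟨ @pi0 X A B >> e , pi1 ⟩ = rst (pi0 >> e).
Proof.
  intro He. rewrite <- (tens_rst X HX A B e He). unfold tens. rewrite (comp_idr _ HX). reflexivity.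
Qed.

Lemma rst_absorb (X : RDRCData) (HX : IsBasicRDRC X) (A B C : Obj X) (f : Hom X A B) (g : Hom X A C) :
  rst f >> rst g >> g = rst f >> g.
Proof. rewrite (comp_assoc _ HX), (R1 _ HX). reflexivity. Qed.

Lemma L1 (X : RDRCData) (HX : IsBasicRDRC X) (A B : Obj X) (e : Hom X A A) (f : Hom X A B) :
  rst e = e -> RD (e >> f) = rst (pi0 >> e) >> RD f.
Proof.
  intro He. rewrite (RD5 _ HX).
  assert (HR : RD e = rst (pi0 >> e) >> pi1).
  { replace (RD e) with (RD (rst e)) by (rewrite He; reflexivity).
    rewrite (RD9 _ HX), He, (tens_rst X HX). reflexivity. exact He. }
  rewrite HR, (T2 X HX _ _ e He).
  set (Y := rst (pi0 >> e) >> RD f).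
  rewrite <- (comp_assoc _ HX), (R4 _ HX), (comp_assoc _ HX), (pair_pi1 _ HX), (pi0t X HX), (comp_idl _ HX).
  rewrite <- (comp_assoc _ HX), (pair_pi0 _ HX).
  rewrite (comp_assoc _ HX), (R3 _ HX), (R2 _ HX), (rst_absorb X HX).
  unfold Y. rewrite <- (comp_assoc _ HX), (rst_idem X HX). reflexivity.
Qed.

Lemma rst_pair1 (X : RDRCData) (HX : IsBasicRDRC X) (A B : Obj X) (c : Hom X A B) :
  rst ⟨ idm A , c ⟩ = rst c.
Proof.
  rewrite <- (rst_total X HX _ _ _ ⟨ idm A , c ⟩ pi1 (pi1t X HX _ _)).
  rewrite (pair_pi1 _ HX), (rst_id X HX), (comp_idl _ HX). reflexivity.
Qed.

Lemma L (X : RDRCData) (HX : IsBasicRDRC X) (A B : Obj X) (e : Hom X A A) (c : Hom X A B) (f : Hom X A B) :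
  rst e = e -> e >> (⟨ idm A , c ⟩ >> RD f) = ⟨ idm A , c ⟩ >> RD (e >> f).
Proof.
  intro He. rewrite (L1 X HX _ _ e f He).
  rewrite <- (comp_assoc _ HX _ _ _ _ ⟨ idm A , c ⟩ (rst (pi0 >> e)) (RD f)).
  rewrite (R4 _ HX), <- (comp_assoc _ HX _ _ _ _ ⟨ idm A , c ⟩ pi0 e), (pair_pi0 _ HX), (comp_idr _ HX).
  rewrite (R3 _ HX), He.
  rewrite <- (comp_assoc _ HX). f_equal.
  replace (rst c >> e) with (e >> rst c) by (rewrite <- He; apply (R2 _ HX)).
  rewrite (comp_assoc _ HX).
  rewrite <- (rst_pair1 X HX), (R1 _ HX). reflexivity.
Qed.

Lemma antisym (X : RDRCData) (HX : IsBasicRDRC X) (A B : Obj X) (f g : Hom X A B) :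
  le f g -> le g f -> f = g.
Proof.
  unfold le. intros H1 H2.
  assert (Hr : rst f = rst g).
  { assert (E1 : rst f = rst f >> rst g) by (rewrite <- (R3 _ HX), H1; reflexivity).
    assert (E2 : rst g = rst g >> rst f) by (rewrite <- (R3 _ HX), H2; reflexivity).
    transitivity (rst f >> rst g). exact E1.
    rewrite (R2 _ HX). exact (eq_sym E2). }
  rewrite <- H1, Hr. exact (R1 _ HX _ _ g).
Qed.

Lemma wlem (X : RDRCData) (HX : IsBasicRDRC X) (G U T : Obj X) (a : Hom X G U) (v : Hom X G T) :
  ⟨ ⟨ idm G , a ⟩ , v ⟩ = ⟨ idm G , a ⟩ >> ⟨ idm _ , pi0 >> v ⟩.
Proof.
  symmetry. apply (pair_uniq _ HX).
  - rewrite (comp_assoc _ HX), (pair_pi0 _ HX), (comp_idr _ HX), (R4 _ HX).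
    rewrite <- (comp_assoc _ HX), (pair_pi0 _ HX), (comp_idr _ HX), (R3 _ HX).
    rewrite (R2 _ HX), (comp_assoc _ HX), <- (rst_pair1 X HX G U a), (R1 _ HX). reflexivity.
  - rewrite (comp_assoc _ HX), (pair_pi1 _ HX), (rst_id X HX), (comp_idl _ HX).
    rewrite <- (comp_assoc _ HX), (pair_pi0 _ HX), (comp_idr _ HX), (rst_pair1 X HX). reflexivity.
Qed.

Theorem mainTheorem3 (X : RDRCData) (HX : IsBasicRDRC X)
  (HJ : has_countable_disjoint_joins X)
  (G U T : Obj X) (bT bF : Hom X (prod G U) one)
  (HbTF : nowhere (rst bT >> rst bF))
  (m n : Hom X (prod G U) T) (a : Hom X G U) (v : Hom X G T)
  (J : Hom X (prod G U) T) (HJoin : is_join2 (rst bT >> m) (rst bF >> n) J) :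
  is_join2
    (rst (⟨ idm G , a ⟩ >> bT) >> (⟨ ⟨ idm G , a ⟩ , v ⟩ >> RD m >> pi1))
    (rst (⟨ idm G , a ⟩ >> bF) >> (⟨ ⟨ idm G , a ⟩ , v ⟩ >> RD n >> pi1))
    (⟨ ⟨ idm G , a ⟩ , v ⟩ >> RD J >> pi1).
Proof.
  rewrite (wlem X HX).
  set (p := ⟨ idm G , a ⟩). set (c := @pi0 X G U >> v).
  set (e1 := rst (rst bT >> m)). set (e2 := rst (rst bF >> n)).
  set (F := fun b : bool => if b then e1 else e2).
  destruct HJoin as [Hm [Hn Hlub]].
  assert (He1 : rst e1 = e1) by apply (rst_rst X HX).
  assert (He2 : rst e2 = e2) by apply (rst_rst X HX).
  assert (HN : forall g : Hom X (prod G U) (prod G U), (rst bT >> rst bF) >> g = rst bT >> rst bF).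
  { intro g. pose proof (HbTF g) as H. unfold le in H.
    rewrite (R3 _ HX), (rst_rst X HX) in H. exact H. }
  assert (H12 : forall g, e1 >> e2 >> g = e1 >> e2).
  { assert (Ee : e1 >> e2 = (rst bT >> rst bF) >> (rst m >> rst n)).
    { unfold e1, e2. rewrite !(R3 _ HX). AS HX. f_equal.
      rewrite <- !(comp_assoc _ HX). f_equal. apply (R2 _ HX). }
    intro g. rewrite Ee, (comp_assoc _ HX), HN, HN. reflexivity. }
  assert (Hdisj : pairwise_disjoint X F).
  { intros [|] [|] Hneq; try (exfalso; apply Hneq; reflexivity);
    unfold disjoint, nowhere, le; intro g; simpl.
    - rewrite (R3 _ HX), He1, He2. rewrite H12. reflexivity.
    - assert (C21 : e2 >> e1 = e1 >> e2) by (rewrite <- He1, <- He2; apply (R2 _ HX)).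
      rewrite (R3 _ HX), He1, He2, C21, H12. reflexivity. }
  assert (Hinj : forall i i' : bool, (if i then 0 else 1) = (if i' then 0 else 1) -> i = i').
  { intros [|] [|] H; try reflexivity; discriminate H. }
  destruct (HJ bool (fun i => if i then 0 else 1) Hinj _ _ F Hdisj) as [[E HE] Hpres].
  assert (HEr : rst E = E).
  { destruct HE as [_ HE2]. assert (Hl : le E (idm _)).
    { apply HE2. intros [|]; unfold le; simpl; rewrite (comp_idr _ HX); [exact He1 | exact He2]. }
    unfold le in Hl. rewrite (comp_idr _ HX) in Hl. exact Hl. }
  assert (HF1 : e1 >> J = rst bT >> m) by exact Hm.
  assert (HF2 : e2 >> J = rst bF >> n) by exact Hn.
  assert (HEJ : E >> J = J).
  { destruct (Hpres _ _ (idm _) J E HE) as [Hup Hl].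
    simpl in Hup, Hl. rewrite (comp_idl _ HX) in Hup, Hl.
    apply (antisym X HX).
    - apply Hl. intros [|]; simpl; rewrite (comp_idl _ HX); [rewrite HF1; exact Hm | rewrite HF2; exact Hn].
    - apply Hlub; [pose proof (Hup true) as H | pose proof (Hup false) as H]; simpl in H;
        rewrite (comp_idl _ HX) in H; [rewrite HF1 in H | rewrite HF2 in H]; exact H. }
  set (kJ := ⟨ idm (prod G U), c ⟩ >> RD J >> pi1).
  destruct (Hpres _ _ p kJ E HE) as [Hup Hl].
  assert (Eq0 : p >> E >> kJ = p >> ⟨ idm (prod G U), c ⟩ >> RD J >> pi1).
  { unfold kJ. AS HX.
    rewrite <- (comp_assoc _ HX _ _ _ _ ⟨ idm (prod G U), c ⟩ (RD J) pi1).
    rewrite <- (comp_assoc _ HX _ _ _ _ E (⟨ idm (prod G U), c ⟩ >> RD J) pi1).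
    rewrite (L X HX _ _ E c J HEr), HEJ. AS HX. reflexivity. }
  assert (EqG : forall (b : Hom X (prod G U) one) (mm : Hom X (prod G U) T) (ee : Hom X (prod G U) (prod G U)),
     rst ee = ee -> ee >> J = rst b >> mm ->
     p >> ee >> kJ = rst (p >> b) >> (p >> ⟨ idm (prod G U), c ⟩ >> RD mm >> pi1)).
  { intros b mm ee Hee HeJ. unfold kJ. AS HX.
    rewrite <- (comp_assoc _ HX _ _ _ _ ⟨ idm (prod G U), c ⟩ (RD J) pi1).
    rewrite <- (comp_assoc _ HX _ _ _ _ ee (⟨ idm (prod G U), c ⟩ >> RD J) pi1).
    rewrite (L X HX _ _ ee c J Hee), HeJ.
    rewrite <- (L X HX _ _ (rst b) c mm (rst_rst X HX _ _ b)).
    AS HX. rewrite <- (comp_assoc _ HX _ _ _ _ p (rst b)), (R4 _ HX). AS HX. reflexivity. }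
  rewrite <- Eq0, <- (EqG bT m e1 He1 HF1), <- (EqG bF n e2 He2 HF2).
  split; [exact (Hup true) | split; [exact (Hup false) |]].
  intros h H1 H2. apply Hl. intros [|]; assumption.
Qed.
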